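(* Let $G$ be a 2-ichromatic ordered graph with vertices $v_1<\dots<v_{m+n}$ such that $\{v_1,\ldots,v_m\}$ and $\{v_{m+1},\ldots,v_{m+n}\}$ are the parts of an interval 2-coloring of $G$ (i.e., both are independent sets). If $v_1v_{m+1}$, $v_mv_{m+n}$ and $v_mv_{m+1}$ are edges of $G$, then $R(G)\ge 5r+1$, where $r=\min(m,n)-1$.
   Context: An ordered graph is a graph together with a specified linear ordering of its vertex set. An ordered graph $G$ is contained in an ordered graph $H$ if there is an order-preserving injection $V(G)\to V(H)$ mapping edges to edges. An interval coloring of an ordered graph is a partition of its vertex set into independent sets each consisting of consecutive vertices (called parts); an ordered graph is 2-ichromatic if its minimum number of parts in an interval coloring is 2. $R(G)$ denotes the 2-color ordered Ramsey number: the minimum $N$ such that every 2-coloring of the edges of the ordered complete graph on $N$ vertices contains a monochromatic copy of $G$. *)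

(* Defs.v *)
From mathcomp Require Import all_boot.
Set Implicit Arguments. Unset Strict Implicit. Unset Printing Implicit Defensive.

(* An ordered graph on V vertices is represented by its vertex count V
   (vertices 0 < 1 < ... < V-1, ordered as naturals) and a relation
   e : rel nat; the edge set is {{i,j} : i < j < V, e i j}, i.e. only
   e i j with i < j is consulted. *)
Definition is_edge (V : nat) (e : rel nat) (i j : nat) : bool :=
  [&& i < j, j < V & e i j].

(* Interval colouring with at most k parts: a nondecreasing class map into
   {0..k-1} such that each class is an independent set (classes of a
   nondecreasing map are intervals). *)
Definition interval_colorable (V : nat) (e : rel nat) (k : nat) : Prop :=
  exists c : nat -> nat,
    [/\ forall i, i < V -> c i < k,
        forall i j, i <= j -> j < V -> c i <= c j
      & forall i j, is_edge V e i j -> c i != c j].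

Definition two_ichromatic (V : nat) (e : rel nat) : Prop :=
  interval_colorable V e 2 /\ ~ interval_colorable V e 1.

(* A red/blue colouring of the ordered complete graph K_N is any
   col : nat -> nat -> bool, the colour of edge {i,j} with i < j < N
   being col i j.  (V, e) has a monochromatic copy of colour b in col if
   there is an order-preserving injection f : [0,V) -> [0,N) sending
   every edge of (V,e) to an edge of colour b. *)
Definition mono_copy (V : nat) (e : rel nat) (N : nat)
  (col : nat -> nat -> bool) : Prop :=
  exists (b : bool) (f : nat -> nat),
    [/\ forall i, i < V -> f i < N,
        forall i j, i < j -> j < V -> f i < f j
      & forall i j, is_edge V e i j -> col (f i) (f j) = b].

(* N has the Ramsey property for (V,e): every 2-colouring of K_N contains a
   monochromatic copy.  R(G) is the least such N. *)
Definition ramsey_prop (V : nat) (e : rel nat) (N : nat) : Prop :=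
  forall col : nat -> nat -> bool, mono_copy V e N col.

(* Main.v *)
Require Import Defs.
From mathcomp Require Import all_boot.
From mathcomp Require Import zify.

Definition Ctab (a b : nat) : bool :=
  match a, b with
  | 1, 1 => true | 1, 3 => true | 1, 4 => true
  | 2, 2 => true | 2, 4 => true | 3, 4 => true
  | _, _ => false
  end.

Lemma Ctab_ok a b c d : a < b -> b <= c -> c < d -> d < 5 ->
  ~ (Ctab a c = Ctab b d /\ Ctab b d = Ctab b c).
Proof.
move=> h1 h2 h3 h4.
destruct d as [|[|[|[|[|d]]]]]; try lia;
destruct c as [|[|[|[|[|c]]]]]; try lia;
destruct b as [|[|[|[|[|b]]]]]; try lia;
destruct a as [|[|[|[|[|a]]]]]; try lia;
simpl; intuition discriminate.
Qed.

Lemma incr_gap (V : nat) (f : nat -> nat) :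
  (forall i j, i < j -> j < V -> f i < f j) ->
  forall i k, i + k < V -> f i + k <= f (i + k).
Proof.
move=> Hf i; elim=> [|k IH] h; first by rewrite !addn0.
have h1 : i + k < V by lia.
have := IH h1; have := Hf (i + k) (i + k.+1) ltac:(lia) h; lia.
Qed.

Lemma div_gap r x y : 0 < r -> x + r <= y -> x %/ r < y %/ r.
Proof.
move=> hr hxy.
have := divnDMl 1 x hr; rewrite mul1n => E.
have := leq_div2r r hxy; rewrite E; lia.
Qed.

Theorem corollary3p3 (m n : nat) (e : rel nat) :
  0 < m -> 0 < n ->
  two_ichromatic (m + n) e ->
  (forall i j, i < j -> j < m -> ~~ e i j) ->
  (forall i j, m <= i -> i < j -> j < m + n -> ~~ e i j) ->
  e 0 m ->
  e m.-1 (m + n).-1 ->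
  e m.-1 m ->
  forall N, ramsey_prop (m + n) e N -> 5 * (minn m n).-1 + 1 <= N.
Proof.
move=> hm hn _ _ _ e1 e2 e3 N HN.
set r := (minn m n).-1.
case: (posnP r) => [r0|rpos].
  rewrite r0.
  have [b [f [Hb Hi He]]] := HN (fun _ _ => true).
  have := Hb 0 ltac:(lia); lia.
rewrite leqNgt; apply/negP => HNlt.
have [b [f [Hb Hi He]]] := HN (fun i j => Ctab (i %/ r) (j %/ r)).
have Hg := @incr_gap (m + n) f Hi.
have rm : r + 1 <= m by rewrite /r; lia.
have rn : r + 1 <= n by rewrite /r; lia.
set x := f 0. set y := f m.-1. set z := f m. set w := f (m + n).-1.
have xy : x + r <= y.
  have := Hg 0 m.-1 ltac:(lia); rewrite add0n /x /y; lia.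
have zw : z + r <= w.
  have := Hg m n.-1 ltac:(lia).
  have -> : m + n.-1 = (m + n).-1 by lia.
  rewrite /z /w; lia.
have yz : y < z by apply: Hi; lia.
have wN : w < 5 * r.
  have := Hb (m + n).-1 ltac:(lia); rewrite /w; lia.
have E1 := He 0 m ltac:(rewrite /is_edge e1; apply/andP; split; [lia|apply/andP; split; [lia|done]]).
have E2 := He m.-1 (m + n).-1 ltac:(rewrite /is_edge e2; apply/andP; split; [lia|apply/andP; split; [lia|done]]).
have E3 := He m.-1 m ltac:(rewrite /is_edge e3; apply/andP; split; [lia|apply/andP; split; [lia|done]]).
simpl in E1, E2, E3.
apply: (@Ctab_ok (x %/ r) (y %/ r) (z %/ r) (w %/ r)).
- exact: div_gap.
- by apply: leq_div2r; apply: ltnW.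
- exact: div_gap.
- by rewrite ltn_divLR // mulnC.
- rewrite /x /y /z /w E1 E2 E3; split; done.
Qed.
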